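(* Let $(\Gamma,m)$ be a smooth closed Riemannian manifold and $\mathcal{M}\subset\mathbb{R}^{n+1}$ an orientable smooth closed hypersurface. Let $\mathcal{N}_T$ be a tubular neighbourhood of $\mathcal{M}$ of fixed width such that each $x\in\mathcal{N}_T$ has a unique decomposition $x=a(x)+d(x)Dd(x)$ with $a(x)\in\mathcal{M}$, $d$ being the signed distance function to $\mathcal{M}$, and let $G(x)=\mathrm{Id}-2d(x)D^2d(x)+2d(x)^2D^2d(x)D^2d(x)$ on $\mathcal{N}_T$. Let $f:\Gamma\to\mathcal{N}_T$ be differentiable. Then $$m(\mathrm{grad}_mf^\alpha,\mathrm{grad}_mf^\beta)\,(\nabla^G_\alpha\nabla^G_\beta d)\circ f=m(\mathrm{grad}_mf^\alpha,\mathrm{grad}_mf^\beta)\,d\circ f\,\big(D_\alpha D_\rho d\,D_\beta D_\rho d\big)\circ f.$$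
   Context: Summation over repeated Greek indices $1,\dots,n+1$ (Euclidean coordinates). $d$ is the signed distance ($\operatorname{dist}(x,\mathcal{M})$ outside the bounded region enclosed by $\mathcal{M}$, minus the distance inside), smooth on $\mathcal{N}_T$ with $|Dd|=1$. $D_\alpha$ are Euclidean partial derivatives. $\nabla^G_\alpha\nabla^G_\beta d=D_\alpha D_\beta d-\Gamma(G)^\gamma_{\alpha\beta}D_\gamma d$ is the Hessian of $d$ w.r.t. $G$, with $\Gamma(G)$ the Christoffel symbols of $G$. *)

(* Defs.v *)
(* Ambient space R^(n+1) = 'rV[R]_(n.+1), R : realType. *)
From HB Require Import structures.
From mathcomp Require Import all_boot all_order all_algebra.
From mathcomp Require Import all_classical all_reals all_analysis.
Set Implicit Arguments. Unset Strict Implicit. Unset Printing Implicit Defensive.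
Import Order.TTheory GRing.Theory Num.Theory numFieldNormedType.Exports.
Local Open Scope classical_set_scope.
Local Open Scope ring_scope.

Section Defs.
Variable R : realType.

(* Euclidean norm (the library norm on 'rV is the sup norm) *)
Definition eucl_norm (m : nat) (x : 'rV[R]_m) : R :=
  Num.sqrt (\sum_(i < m) x ord0 i ^+ 2).

Definition set_dist (m : nat) (x : 'rV[R]_m) (M : set 'rV[R]_m) : R :=
  inf [set eucl_norm (x - a) | a in M].

(* bounded region enclosed by M: points off M whose component of the complement is bounded *)
Definition inside (m : nat) (M : set 'rV[R]_m) (x : 'rV[R]_m) : Prop :=
  ~ M x /\ bounded_set (connected_component (~` M) x).

Definition sdist (m : nat) (M : set 'rV[R]_m) (x : 'rV[R]_m) : R :=
  if `[< inside M x >] then - set_dist x M else set_dist x M.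

Definition partial (m : nat) (i : 'I_m) (f : 'rV[R]_m -> R) : 'rV[R]_m -> R :=
  fun x => 'D_(delta_mx 0 i) f x.

Definition iter_partial (m : nat) (s : seq 'I_m) (f : 'rV[R]_m -> R) :=
  foldr (fun i g => partial i g) f s.

Definition smooth_on (m : nat) (U : set 'rV[R]_m) (f : 'rV[R]_m -> R) : Prop :=
  forall (s : seq 'I_m) x, U x -> differentiable (iter_partial s f) x.

Definition gradient (m : nat) (f : 'rV[R]_m -> R) (x : 'rV[R]_m) : 'rV[R]_m :=
  \row_i partial i f x.

Definition local_def (m : nat) (M : set 'rV[R]_m) (p : 'rV[R]_m)
    (V : set 'rV[R]_m) (phi : 'rV[R]_m -> R) : Prop :=
  [/\ open V, V p, smooth_on V phi,
      (forall x, V x -> gradient phi x != 0) &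
      M `&` V = [set x | V x /\ phi x = 0]].

(* smooth closed (compact, boundaryless, embedded) hypersurface *)
Definition closed_hypersurface (m : nat) (M : set 'rV[R]_m) : Prop :=
  [/\ compact M, M !=set0 &
      forall p, M p -> exists V phi, local_def M p V phi].

Definition orientable_hypersurface (m : nat) (M : set 'rV[R]_m) : Prop :=
  exists nu : 'rV[R]_m -> 'rV[R]_m,
    {within M, continuous nu} /\
    forall p, M p -> eucl_norm (nu p) = 1 /\
      forall V phi, local_def M p V phi -> exists c : R, nu p = c *: gradient phi p.

Definition hess (m : nat) (d : 'rV[R]_m -> R) (x : 'rV[R]_m) : 'M[R]_m :=
  \matrix_(i, j) partial i (partial j d) x.

Definition Gmet (m : nat) (d : 'rV[R]_m -> R) (x : 'rV[R]_m) : 'M[R]_m :=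
  1%:M - (2 * d x) *: hess d x + (2 * d x ^+ 2) *: (hess d x *m hess d x).

Definition christoffel (m : nat) (d : 'rV[R]_m -> R) (c a b : 'I_m)
    (x : 'rV[R]_m) : R :=
  2^-1 * \sum_(mu < m) invmx (Gmet d x) c mu *
    (partial a (fun y => Gmet d y mu b) x + partial b (fun y => Gmet d y mu a) x
     - partial mu (fun y => Gmet d y a b) x).

Definition hessG (m : nat) (d : 'rV[R]_m -> R) (a b : 'I_m) (x : 'rV[R]_m) : R :=
  partial a (partial b d) x - \sum_(c < m) christoffel d c a b x * partial c d x.

(* Riemannian data of Gamma in a local chart: metric matrix g(y) *)
Definition riem_grad (k : nat) (g : 'rV[R]_k -> 'M[R]_k) (h : 'rV[R]_k -> R)
    (y : 'rV[R]_k) : 'rV[R]_k :=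
  gradient h y *m invmx (g y).

Definition riem_inner (k : nat) (g : 'rV[R]_k -> 'M[R]_k) (y : 'rV[R]_k)
    (u v : 'rV[R]_k) : R :=
  (u *m g y *m v^T) ord0 ord0.

End Defs.

(* Main.v *)
Require Import Defs.
From HB Require Import structures.
From mathcomp Require Import all_boot all_order all_algebra.
From mathcomp Require Import all_classical all_reals all_analysis.
From mathcomp Require Import ring lra.
Import Order.TTheory GRing.Theory Num.Theory numFieldNormedType.Exports.
Local Open Scope classical_set_scope.
Local Open Scope ring_scope.

Section S.
Variable R : realType.

Lemma eucl_cont m (a : 'rV[R]_m) : continuous (fun z : 'rV[R]_m => eucl_norm (z - a)).
Proof.
move=> z; rewrite /eucl_norm.
apply: (continuous_comp (f := fun z : 'rV[R]_m => \sum_(i < m) (z - a) ord0 i ^+ 2)); last first.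
  exact: sqrt_continuous.
apply: differentiable_continuous.
have -> : (fun z0 : 'rV[R]_m => \sum_(i < m) (z0 - a) ord0 i ^+ 2) = \sum_(i < m) (fun z0 => (z0 - a) ord0 i ^+ 2).
  by rewrite fct_sumE.
apply: differentiable_sum => i.
have -> : (fun z0 : 'rV[R]_m => (z0 - a) ord0 i ^+ 2) = ((fun z0 => z0 ord0 i) - cst (a ord0 i)) ^+ 2.
  by apply/funext => w; rewrite !mxE.
apply: (differentiableX 1).
apply: differentiableB => //.
exact: differentiable_coord.
exact: differentiable_cst.
Qed.

Lemma tube_open m (M : set 'rV[R]_m) (T : R) : M !=set0 -> open [set x | set_dist x M < T].
Proof.
move=> [a0 Ma0]; rewrite openE => x /= hx.
have Sne : [set eucl_norm (x - a) | a in M] !=set0 by exists (eucl_norm (x - a0)), a0.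
have [_ [a Ma <-] lt] := inf_lt Sne hx.
have /cvgr_lt /(_ _ lt) := @eucl_cont _ a x.
rewrite /interior; apply: filterS => z /= hz.
apply: le_lt_trans hz; apply: ge_inf; last by exists a.
exists 0 => _ [b _ <-]; exact: sqrtr_ge0.
Qed.

Lemma line_quot m (phi : 'rV[R]_m -> R) (v c : 'rV[R]_m) (t0 : R) :
  (fun h : R => h^-1 *: (((fun t : R => phi (t *: v + c)) \o shift t0) (h *: 1) - phi (t0 *: v + c)))
  = (fun h : R => h^-1 *: ((phi \o shift (t0 *: v + c)) (h *: v) - phi (t0 *: v + c))).
Proof.
apply/funext => h /=; congr (_ *: (phi _ - _)).
by rewrite [h *: 1]mulr1 scalerDl addrA.
Qed.

Lemma line_is_derive m (phi : 'rV[R]_m -> R) (v c : 'rV[R]_m) (t0 : R) :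
  derivable phi (t0 *: v + c) v ->
  is_derive t0 1 (fun t : R => phi (t *: v + c)) ('D_v phi (t0 *: v + c)).
Proof.
move=> dphi; split.
  by rewrite /derivable line_quot.
by rewrite /derive line_quot.
Qed.

Lemma mvt0 (f df : R -> R) (h : R) : 0 < h ->
  (forall t, 0 <= t <= h -> is_derive t 1 f (df t)) ->
  exists2 c, 0 <= c <= h & f h - f 0 = df c * h.
Proof.
move=> h0 hd.
have [c] : exists2 c, c \in `]0, h[ & f h - f 0 = df c * (h - 0).
  apply: MVT => //.
  - move=> t; rewrite in_itv /= => /andP[t0 th]; apply: hd.
    by rewrite !ltW.
  - apply: derivable_within_continuous => t; rewrite in_itv /= => ht.
    by have [] := hd t ht.
rewrite in_itv /= subr0 => /andP[c0 ch] ->; exists c => //.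
by rewrite !ltW.
Qed.

Lemma delta_step m (phi : 'rV[R]_m -> R) (u w x : 'rV[R]_m) (h : R) : 0 < h ->
  (forall s t, 0 <= s <= h -> 0 <= t <= h ->
     differentiable phi (s *: u + t *: w + x) /\
     differentiable ('D_u phi) (s *: u + t *: w + x)) ->
  exists s t, [/\ 0 <= s <= h, 0 <= t <= h &
    phi (h *: u + h *: w + x) - phi (h *: u + x) - phi (h *: w + x) + phi x
      = h ^+ 2 * 'D_w ('D_u phi) (s *: u + t *: w + x)].
Proof.
move=> h0 hd.
have hh : 0 <= h <= h.
by apply/andP; split; [exact: ltW|].
have h00 : (0:R) <= 0 <= h by apply/andP; split; [|exact: ltW].
pose u1 t := phi (t *: u + (h *: w + x)) - phi (t *: u + x).
have [c hc Ec] : exists2 c, 0 <= c <= h & u1 h - u1 0 =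
   ('D_u phi (c *: u + (h *: w + x)) - 'D_u phi (c *: u + x)) * h.
  apply: (@mvt0 u1 (fun t => 'D_u phi (t *: u + (h *: w + x)) - 'D_u phi (t *: u + x)) h h0).
  move=> t ht; apply: is_deriveB; apply: line_is_derive; apply: diff_derivable.
    by have [] := hd t h ht hh; rewrite addrA.
  by have [] := hd t 0 ht h00; rewrite scale0r addr0.
pose w1 t := 'D_u phi (t *: w + (c *: u + x)).
have [d hd' Ed] : exists2 d, 0 <= d <= h & w1 h - w1 0 =
   'D_w ('D_u phi) (d *: w + (c *: u + x)) * h.
  apply: (@mvt0 w1 (fun t => 'D_w ('D_u phi) (t *: w + (c *: u + x))) h h0).
  move=> t ht; apply: line_is_derive; apply: diff_derivable.
  by have [_] := hd c t hc ht; rewrite addrCA addrA.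
exists c, d; split => //.
have -> : phi (h *: u + h *: w + x) - phi (h *: u + x) - phi (h *: w + x) + phi x
   = u1 h - u1 0.
  rewrite /u1 scale0r !add0r addrA; ring.
rewrite Ec.
have -> : 'D_u phi (c *: u + (h *: w + x)) - 'D_u phi (c *: u + x) = w1 h - w1 0.
  by rewrite /w1 scale0r add0r addrCA.
rewrite Ed addrCA addrA; ring.
Qed.

Lemma schwarz m (O : set 'rV[R]_m) (phi : 'rV[R]_m -> R) (u w x : 'rV[R]_m) :
  open O -> O x ->
  (forall z, O z -> [/\ differentiable phi z, differentiable ('D_u phi) z
                       & differentiable ('D_w phi) z]) ->
  {for x, continuous ('D_w ('D_u phi))} -> {for x, continuous ('D_u ('D_w phi))} ->
  'D_w ('D_u phi) x = 'D_u ('D_w phi) x.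
Proof.
move=> oO Ox hd cA cB.
set A := 'D_w ('D_u phi) in cA *; set B := 'D_u ('D_w phi) in cB *.
have [//|hne] := eqVneq (A x) (B x); exfalso.
set eps := `|A x - B x| / 2.
have eps0 : 0 < eps by rewrite divr_gt0 // normr_gt0 subr_eq0.
have N1 : nbhs x O := open_nbhs_nbhs (conj oO Ox).
have /cvgr_dist_lt/(_ _ eps0) N2 := cA.
have /cvgr_dist_lt/(_ _ eps0) N3 := cB.
have Nall : nbhs x (O `&` ([set z | `|A x - A z| < eps] `&` [set z | `|B x - B z| < eps])).
  apply: filterI; first exact: N1.
  by apply: filterI; [exact: N2|exact: N3].
have [r /= r0 Hr] := (nbhs_ballP x _).1 Nall.
set C := `|u| + `|w| + 1.
have C0 : 0 < C by rewrite /C ltr_pwDr // addr_ge0.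
set h := r / (2 * C).
have h0 : 0 < h by rewrite /h divr_gt0 // mulr_gt0.
have inball : forall (p q : 'rV[R]_m) s t, `|p| + `|q| + 1 <= C ->
    0 <= s <= h -> 0 <= t <= h ->
    (O `&` ([set z | `|A x - A z| < eps] `&` [set z | `|B x - B z| < eps]))
      (s *: p + t *: q + x).
  move=> p q s t hC /andP[s0 sh] /andP[t0 th]; apply: Hr.
  rewrite -ball_normE /= [s *: p + _ + x]addrC opprD addrA subrr add0r normrN.
  apply: le_lt_trans (ler_normD _ _) _.
  rewrite !normrZ !(ger0_norm s0) !(ger0_norm t0).
  have np := normr_ge0 p; have nq := normr_ge0 q.
  have hC2 : h * C = r / 2.
    rewrite /h invfM mulrA -mulrA mulVf ?mulr1 //; exact: lt0r_neq0.
  have H1 : s * `|p| + t * `|q| <= h * (`|p| + `|q|).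
    by rewrite mulrDr; apply: lerD; apply: ler_wpM2r.
  apply: le_lt_trans H1 _.
  have H2 : h * (`|p| + `|q|) < h * C by rewrite ltr_pM2l //; lra.
  apply: lt_le_trans H2 _; rewrite hC2; lra.
have Cuw : `|u| + `|w| + 1 <= C by [].
have Cwu : `|w| + `|u| + 1 <= C by rewrite /C [`|w| + _]addrC.
have hh : 0 <= h <= h by apply/andP; split; [exact: ltW|].
have [s1 [t1 [hs1 ht1 E1]]] := @delta_step _ phi u w x h h0 (fun s t hs ht =>
  let: And3 d1 d2 _ := hd _ (inball u w s t Cuw hs ht).1 in conj d1 d2).
have [s2 [t2 [hs2 ht2 E2]]] := @delta_step _ phi w u x h h0 (fun s t hs ht =>
  let: And3 d1 _ d3 := hd _ (inball w u s t Cwu hs ht).1 in conj d1 d3).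
have D12 : phi (h *: u + h *: w + x) - phi (h *: u + x) - phi (h *: w + x) + phi x
   = phi (h *: w + h *: u + x) - phi (h *: w + x) - phi (h *: u + x) + phi x.
  rewrite [h *: w + h *: u]addrC; ring.
have hn : h ^+ 2 != 0 by rewrite expf_neq0 // lt0r_neq0.
have EAB0 : h ^+ 2 * A (s1 *: u + t1 *: w + x) = h ^+ 2 * B (s2 *: w + t2 *: u + x).
  exact: (etrans (esym E1) (etrans D12 E2)).
have EAB := mulfI hn EAB0.
have [_ [a1 _]] := inball u w s1 t1 Cuw hs1 ht1.
have [_ [_ b2]] := inball w u s2 t2 Cwu hs2 ht2.
move: a1 b2 => /= a1 b2.
have : `|A x - B x| < eps + eps.
  have -> : A x - B x = (A x - A (s1 *: u + t1 *: w + x)) - (B x - B (s2 *: w + t2 *: u + x)).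
    by rewrite EAB opprB addrA subrK.
  apply: le_lt_trans (ler_normB _ _) _.
  exact: (ltrD a1 b2).
move=> hlt.
have e2 : eps + eps = `|A x - B x| by rewrite /eps -splitr.
by move: hlt; rewrite e2 ltxx.
Qed.
End S.

Section SD.
Variable R : realType.
Variable m : nat.
Local Notation V := 'rV[R]_m.
Implicit Types (f g : V -> R) (x v : V).

Lemma isd_cst (c : R) x v : is_derive x v (fun _ : V => c) 0.
Proof. exact: is_derive_cst. Qed.

Lemma isd_D f g x v df dg : is_derive x v f df -> is_derive x v g dg ->
  is_derive x v (fun z => f z + g z) (df + dg).
Proof. move=> hf hg; exact: is_deriveD. Qed.

Lemma isd_B f g x v df dg : is_derive x v f df -> is_derive x v g dg ->
  is_derive x v (fun z => f z - g z) (df - dg).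
Proof. move=> hf hg; exact: is_deriveB. Qed.

Lemma isd_M f g x v df dg : is_derive x v f df -> is_derive x v g dg ->
  is_derive x v (fun z => f z * g z) (f x * dg + df * g x).
Proof.
move=> hf hg; have := is_deriveM hf hg.
by rewrite [g x *: _]mulrC.
Qed.

Lemma isd_sum n (F : 'I_n -> V -> R) (dF : 'I_n -> R) x v :
  (forall i, is_derive x v (F i) (dF i)) ->
  is_derive x v (fun z => \sum_(i < n) F i z) (\sum_(i < n) dF i).
Proof.
move=> h; have := is_derive_sum h.
by rewrite fct_sumE.
Qed.

Lemma isd_base f x v : differentiable f x -> is_derive x v f ('D_v f x).
Proof. by move=> h; apply: derivableP; exact: diff_derivable. Qed.
End SD.

Section Alg.
Variable R : realType.
Variable n : nat.
Variables (P : 'I_n -> R) (H : 'I_n -> 'I_n -> R) (T : 'I_n -> 'I_n -> 'I_n -> R) (d0 : R).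
Hypothesis Hs : forall i j, H i j = H j i.
Hypothesis Ts1 : forall k i j, T k i j = T k j i.
Hypothesis Ts2 : forall k i j, T k i j = T i k j.
Hypothesis PU : \sum_(i < n) P i ^+ 2 = 1.
Hypothesis PZ : forall j, \sum_(i < n) P i * H j i = 0.
Hypothesis PR : forall k j, \sum_(i < n) (H k i * H j i + P i * T k j i) = 0.

Definition DG (a mu b : 'I_n) : R :=
  -2 * (P a * H mu b + d0 * T a mu b) +
  2 * (2 * d0 * P a * (\sum_(nu < n) H mu nu * H nu b) +
       d0 ^+ 2 * \sum_(nu < n) (H mu nu * T a nu b + T a mu nu * H nu b)).

Definition K (a b : 'I_n) := \sum_(i < n) H a i * H b i.

Lemma Ksym a b : K a b = K b a.
Proof. by apply: eq_bigr => i _; rewrite mulrC. Qed.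

Lemma Q1 j : \sum_(mu < n) P mu * H mu j = 0.
Proof. by rewrite -[RHS](PZ j); apply: eq_bigr => i _; rewrite Hs. Qed.

Lemma Q2 a b : \sum_(mu < n) P mu * T a mu b = - K a b.
Proof.
have := PR a b; rewrite big_split /= => /eqP; rewrite addrC addr_eq0 => /eqP <-.
by apply: eq_bigr => i _; rewrite Ts1.
Qed.

Lemma Q3 a b : \sum_(mu < n) P mu * T mu a b = - K a b.
Proof. by rewrite -Q2; apply: eq_bigr => i _; rewrite Ts2. Qed.

Lemma swapL (A : 'I_n -> 'I_n -> R) (X : 'I_n -> R) :
  \sum_(mu < n) P mu * (\sum_(nu < n) A mu nu * X nu)
  = \sum_(nu < n) (\sum_(mu < n) P mu * A mu nu) * X nu.
Proof.
under eq_bigr => mu _ do rewrite mulr_sumr.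
rewrite exchange_big /=; apply: eq_bigr => nu _.
by rewrite mulr_suml; apply: eq_bigr => mu _; rewrite mulrA.
Qed.

Lemma swapR (A : 'I_n -> 'I_n -> R) (X : 'I_n -> R) :
  \sum_(mu < n) P mu * (\sum_(nu < n) X nu * A mu nu)
  = \sum_(nu < n) X nu * (\sum_(mu < n) P mu * A mu nu).
Proof.
rewrite -[RHS](_ : \sum_(nu < n) (\sum_(mu < n) P mu * A mu nu) * X nu = _).
  rewrite -swapL; apply: eq_bigr => mu _; congr (_ * _).
  by apply: eq_bigr => nu _; rewrite mulrC.
by apply: eq_bigr => nu _; rewrite mulrC.
Qed.

Lemma S0 (X : 'I_n -> R) : \sum_(nu < n) (\sum_(mu < n) P mu * H mu nu) * X nu = 0.
Proof. by apply: big1 => nu _; rewrite Q1 mul0r. Qed.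

Lemma S2 a (X : 'I_n -> R) : \sum_(nu < n) (\sum_(mu < n) P mu * T a mu nu) * X nu
  = - \sum_(nu < n) K a nu * X nu.
Proof. by rewrite -sumrN; apply: eq_bigr => nu _; rewrite Q2 mulNr. Qed.

Lemma E1 a b : \sum_(mu < n) P mu * DG a mu b =
  2 * d0 * K a b - 2 * d0 ^+ 2 * \sum_(nu < n) K a nu * H nu b.
Proof.
have -> : \sum_(mu < n) P mu * DG a mu b =
  (-2 * P a) * (\sum_(mu < n) P mu * H mu b) +
  (-2 * d0) * (\sum_(mu < n) P mu * T a mu b) +
  (4 * d0 * P a) * (\sum_(mu < n) P mu * (\sum_(nu < n) H mu nu * H nu b)) +
  (2 * d0 ^+ 2) * (\sum_(mu < n) P mu * (\sum_(nu < n) H mu nu * T a nu b)) +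
  (2 * d0 ^+ 2) * (\sum_(mu < n) P mu * (\sum_(nu < n) T a mu nu * H nu b)).
  rewrite !mulr_sumr -!big_split /=; apply: eq_bigr => mu _.
  rewrite /DG big_split /=; ring.
rewrite Q1 Q2 !swapL !S0 S2; ring.
Qed.
Lemma E3 a b : \sum_(mu < n) P mu * DG mu a b =
  -2 * H a b + 2 * d0 * K a b + 4 * d0 * (\sum_(nu < n) H a nu * H nu b)
  - 2 * d0 ^+ 2 * \sum_(nu < n) H a nu * K nu b
  - 2 * d0 ^+ 2 * \sum_(nu < n) K a nu * H nu b.
Proof.
have -> : \sum_(mu < n) P mu * DG mu a b =
  (-2 * H a b) * (\sum_(mu < n) P mu ^+ 2) +
  (-2 * d0) * (\sum_(mu < n) P mu * T mu a b) +
  (4 * d0 * (\sum_(nu < n) H a nu * H nu b)) * (\sum_(mu < n) P mu ^+ 2) +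
  (2 * d0 ^+ 2) * (\sum_(mu < n) P mu * (\sum_(nu < n) H a nu * T mu nu b)) +
  (2 * d0 ^+ 2) * (\sum_(mu < n) P mu * (\sum_(nu < n) T mu a nu * H nu b)).
  rewrite /DG; set S := \sum_(nu < n) H a nu * H nu b; clearbody S.
  rewrite !mulr_sumr -!big_split /=; apply: eq_bigr => mu _.
  rewrite big_split /=; ring.
rewrite PU Q3 (swapR (fun mu nu => T mu nu b)) (swapL (fun mu nu => T mu a nu)).
have S3a : \sum_(nu < n) H a nu * (\sum_(mu < n) P mu * T mu nu b)
   = - \sum_(nu < n) H a nu * K nu b.
  by rewrite -sumrN; apply: eq_bigr => nu _; rewrite Q3 mulrN.
have S3b : \sum_(nu < n) (\sum_(mu < n) P mu * T mu a nu) * H nu b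
   = - \sum_(nu < n) K a nu * H nu b.
  by rewrite -sumrN; apply: eq_bigr => nu _; rewrite Q3 mulNr.
rewrite S3a S3b; ring.
Qed.

Lemma alg a b :
  H a b - 2^-1 * \sum_(mu < n) P mu * (DG a mu b + DG b mu a - DG mu a b)
  = d0 * \sum_(rho < n) H a rho * H b rho.
Proof.
have -> : \sum_(mu < n) P mu * (DG a mu b + DG b mu a - DG mu a b) =
  \sum_(mu < n) P mu * DG a mu b + \sum_(mu < n) P mu * DG b mu a
  - \sum_(mu < n) P mu * DG mu a b.
  by rewrite -big_split /= -sumrB; apply: eq_bigr => mu _; ring.
rewrite E1 E1 E3.
have -> : \sum_(nu < n) H a nu * H nu b = K a b.
  by apply: eq_bigr => nu _; rewrite (Hs nu b).
have -> : \sum_(nu < n) H a nu * K nu b = \sum_(nu < n) K b nu * H nu a.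
  by apply: eq_bigr => nu _; rewrite Ksym (Hs a nu) mulrC.
rewrite (Ksym b a) -/(K a b).
set S1 := \sum_(nu < n) K a nu * H nu b.
set S2 := \sum_(nu < n) K b nu * H nu a.
set k := K a b.
clearbody S1 S2 k.
have -> : 2 * d0 * k - 2 * d0 ^+ 2 * S1 + (2 * d0 * k - 2 * d0 ^+ 2 * S2) -
   (-2 * H a b + 2 * d0 * k + 4 * d0 * k - 2 * d0 ^+ 2 * S2 - 2 * d0 ^+ 2 * S1)
   = 2 * (H a b - d0 * k) by ring.
rewrite mulrA mulVf ?mul1r; first ring.
by rewrite pnatr_eq0.
Qed.
End Alg.


Arguments isd_M {R m f g x v df dg}.
Arguments isd_D {R m f g x v df dg}.
Arguments isd_B {R m f g x v df dg}.
Arguments isd_cst {R m} c {x v}.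
Arguments isd_base {R m f x v}.
Arguments isd_sum {R m n F dF x v}.
Arguments DG {R n}.

Section F.
Variable R : realType.
Variable m : nat.

Lemma Gentry (d : 'rV[R]_m -> R) z mu b : Gmet d z mu b =
  (1%:M : 'M[R]_m) mu b - 2 * d z * partial mu (partial b d) z
  + 2 * (d z * d z) * \sum_(nu < m) partial mu (partial nu d) z * partial nu (partial b d) z.
Proof.
rewrite /Gmet !mxE expr2; congr (_ + _ * _).
by apply: eq_bigr => nu _; rewrite !mxE.
Qed.

Lemma DG_alg (dx pa Hmb Tamb S dS : R) :
  0 - (2 * dx * Tamb + (2 * pa + 0 * dx) * Hmb) +
  (2 * (dx * dx) * dS + (2 * (dx * pa + pa * dx) + 0 * (dx * dx)) * S)
  = -2 * (pa * Hmb + dx * Tamb) + 2 * (2 * dx * pa * S + dx ^+ 2 * dS).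
Proof. ring. Qed.

Lemma dG (d : 'rV[R]_m -> R) x a mu b :
  differentiable d x -> (forall i, differentiable (partial i d) x) ->
  (forall i j, differentiable (partial i (partial j d)) x) ->
  partial a (fun z => Gmet d z mu b) x =
  DG (fun i => partial i d x) (fun i j => partial i (partial j d) x)
     (fun k i j => partial k (partial i (partial j d)) x) (d x) a mu b.
Proof.
move=> hd0 hd1 hd2.
have -> : (fun z => Gmet d z mu b) = (fun z =>
   ((1%:M : 'M[R]_m) mu b - 2 * d z * partial mu (partial b d) z)
   + 2 * (d z * d z) * \sum_(nu < m) partial mu (partial nu d) z * partial nu (partial b d) z).
  by apply/funext => z; rewrite Gentry.
pose v : 'rV[R]_m := delta_mx 0 a.
have I2 : is_derive x v (fun z => 2 * d z) (2 * 'D_v d x + 0 * d x).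
  exact: (@isd_M R m (fun _ => 2) d x v 0 _ (isd_cst 2) (isd_base hd0)).
have I3 : is_derive x v (fun z => 2 * d z * partial mu (partial b d) z)
   (2 * d x * 'D_v (partial mu (partial b d)) x + (2 * 'D_v d x + 0 * d x) * partial mu (partial b d) x).
  exact: (isd_M I2 (isd_base (hd2 mu b))).
have I4 : is_derive x v (fun z => (1%:M : 'M[R]_m) mu b - 2 * d z * partial mu (partial b d) z)
   (0 - (2 * d x * 'D_v (partial mu (partial b d)) x + (2 * 'D_v d x + 0 * d x) * partial mu (partial b d) x)).
  exact: (isd_B (isd_cst _) I3).
have I5 : is_derive x v (fun z => 2 * (d z * d z))
   (2 * (d x * 'D_v d x + 'D_v d x * d x) + 0 * (d x * d x)).
  exact: (@isd_M R m (fun _ => 2) _ x v 0 _ (isd_cst 2)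
           (isd_M (isd_base hd0) (isd_base hd0))).
have I6 : is_derive x v (fun z => \sum_(nu < m) partial mu (partial nu d) z * partial nu (partial b d) z)
   (\sum_(nu < m) (partial mu (partial nu d) x * 'D_v (partial nu (partial b d)) x
                  + 'D_v (partial mu (partial nu d)) x * partial nu (partial b d) x)).
  apply: (@isd_sum R m m (fun nu z => partial mu (partial nu d) z * partial nu (partial b d) z)).
  move=> nu; exact: (isd_M (isd_base (hd2 mu nu)) (isd_base (hd2 nu b))).
have I7 := isd_D I4 (isd_M I5 I6).
rewrite {1}/partial -/v; case: I7 => _ ->.
rewrite /DG /= -/v.
exact: DG_alg.
Qed.

Lemma smooth_partial {O : set 'rV[R]_m} {phi} j :
  smooth_on O phi -> smooth_on O (partial j phi).
Proof.
move=> h s z Oz; have := h (rcons s j) z Oz.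
by rewrite /iter_partial -cats1 foldr_cat.
Qed.

Lemma smooth_diff {O : set 'rV[R]_m} {phi} {z} : smooth_on O phi -> O z -> differentiable phi z.
Proof. by move=> h Oz; exact: (h [::] z Oz). Qed.

Lemma sym2 (O : set 'rV[R]_m) phi i j x : open O -> smooth_on O phi -> O x ->
  partial i (partial j phi) x = partial j (partial i phi) x.
Proof.
move=> oO hs Ox.
apply: (@schwarz R m O phi (delta_mx 0 j) (delta_mx 0 i) x oO Ox).
- move=> z Oz; split.
  + exact: smooth_diff hs Oz.
  + exact: smooth_diff (smooth_partial j hs) Oz.
  + exact: smooth_diff (smooth_partial i hs) Oz.
- apply: differentiable_continuous.
  exact: smooth_diff (smooth_partial i (smooth_partial j hs)) Ox.
- apply: differentiable_continuous.
  exact: smooth_diff (smooth_partial j (smooth_partial i hs)) Ox.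
Qed.

Lemma near_partial {O : set 'rV[R]_m} {f g : 'rV[R]_m -> R} k {x} : open O -> O x ->
  (forall z, O z -> f z = g z) -> partial k f x = partial k g x.
Proof.
move=> oO Ox hfg; rewrite /partial; apply: near_eq_derive.
have N1 : nbhs x O := open_nbhs_nbhs (conj oO Ox).
by apply: filterS N1.
Qed.

Lemma PZ_lem (O : set 'rV[R]_m) d z j : open O -> smooth_on O d ->
  (forall z, O z -> \sum_(i < m) partial i d z * partial i d z = 1) -> O z ->
  \sum_(i < m) partial i d z * partial j (partial i d) z = 0.
Proof.
move=> oO hs hu Oz.
have Hd i : differentiable (partial i d) z := smooth_diff (smooth_partial i hs) Oz.
have ID : is_derive z (delta_mx 0 j) (fun w => \sum_(i < m) partial i d w * partial i d w)
   (\sum_(i < m) (partial i d z * partial j (partial i d) z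
                  + partial j (partial i d) z * partial i d z)).
  apply: isd_sum => i; exact: (isd_M (isd_base (Hd i)) (isd_base (Hd i))).
have IC : is_derive z (delta_mx 0 j) (fun _ : 'rV[R]_m => (1:R)) 0 := isd_cst 1.
have E := near_partial j oO Oz hu.
move: E; rewrite /partial; case: ID => _ ->; case: IC => _ -> E.
have : 2 * \sum_(i < m) partial i d z * partial j (partial i d) z = 0.
  rewrite mulr_sumr -[RHS]E; apply: eq_bigr => i _.
  rewrite [partial j _ z * _]mulrC; ring.
by move/eqP; rewrite mulf_eq0 pnatr_eq0 /= => /eqP.
Qed.

Lemma PR_lem (O : set 'rV[R]_m) d x k j : open O -> smooth_on O d ->
  (forall z, O z -> \sum_(i < m) partial i d z * partial i d z = 1) -> O x ->
  \sum_(i < m) (partial k (partial i d) x * partial j (partial i d) x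
                + partial i d x * partial k (partial j (partial i d)) x) = 0.
Proof.
move=> oO hs hu Ox.
have Hd i : differentiable (partial i d) x := smooth_diff (smooth_partial i hs) Ox.
have Hd2 i : differentiable (partial j (partial i d)) x :=
  smooth_diff (smooth_partial j (smooth_partial i hs)) Ox.
have ID : is_derive x (delta_mx 0 k) (fun w => \sum_(i < m) partial i d w * partial j (partial i d) w)
   (\sum_(i < m) (partial i d x * partial k (partial j (partial i d)) x
                  + partial k (partial i d) x * partial j (partial i d) x)).
  apply: isd_sum => i; exact: (isd_M (isd_base (Hd i)) (isd_base (Hd2 i))).
have IC : is_derive x (delta_mx 0 k) (fun _ : 'rV[R]_m => (0:R)) 0 := isd_cst 0.
have E := @near_partial O (fun w => \sum_(i < m) partial i d w * partial j (partial i d) w)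
  (fun _ => 0) k x oO Ox (fun z Oz => @PZ_lem O d z j oO hs hu Oz).
move: E; rewrite /partial; case: ID => _ ->; case: IC => _ -> E.
rewrite -[RHS]E.
by apply: eq_bigr => i _; rewrite addrC.
Qed.

Lemma PInv_lem (Hm : 'M[R]_m) (Prow : 'rV[R]_m) (d0 : R) :
  Prow *m Hm = 0 ->
  Prow *m invmx (1%:M - (2 * d0) *: Hm + (2 * d0 ^+ 2) *: (Hm *m Hm)) = Prow.
Proof.
move=> PH.
set G := 1%:M - _ + _.
have PG : Prow *m G = Prow.
  rewrite /G mulmxDr mulmxBr mulmx1 -!scalemxAr mulmxA PH mul0mx !scaler0.
  by rewrite subr0 addr0.
case: (boolP (G \in unitmx)) => [U|NU].
  by rewrite -{1}PG mulmxK.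
by rewrite invmx_out.
Qed.
End F.

Theorem mainTheorem8 (R : realType) (n : nat) (M : set 'rV[R]_(n.+1)) (T : R)
  (hM : closed_hypersurface M) (hMo : orientable_hypersurface M) (hT : 0 < T)
  (hsmooth : smooth_on [set x | set_dist x M < T] (sdist M))
  (hunit : forall x, set_dist x M < T -> eucl_norm (gradient (sdist M) x) = 1)
  (hdecomp : forall x, set_dist x M < T ->
     exists! a, M a /\ x = a + sdist M x *: gradient (sdist M) x)
  (k : nat) (U : set 'rV[R]_k) (hU : open U)
  (g : 'rV[R]_k -> 'M[R]_k)
  (hgsym : forall y, U y -> (g y)^T = g y)
  (hgpos : forall y, U y -> forall v : 'rV[R]_k, v != 0 -> 0 < (v *m g y *m v^T) ord0 ord0)
  (hgsmooth : forall i j, smooth_on U (fun y => g y i j))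
  (f : 'rV[R]_k -> 'rV[R]_(n.+1))
  (hfN : forall y, U y -> set_dist (f y) M < T)
  (hfdiff : forall y, U y -> differentiable f y) :
  forall y, U y ->
    \sum_(a < n.+1) \sum_(b < n.+1)
      riem_inner g y (riem_grad g (fun z => f z ord0 a) y)
                     (riem_grad g (fun z => f z ord0 b) y)
      * hessG (sdist M) a b (f y)
    =
    \sum_(a < n.+1) \sum_(b < n.+1)
      riem_inner g y (riem_grad g (fun z => f z ord0 a) y)
                     (riem_grad g (fun z => f z ord0 b) y)
      * (sdist M (f y) *
         \sum_(rho < n.+1) hess (sdist M) (f y) a rho * hess (sdist M) (f y) b rho).
Proof.
move=> y Uy.
set d := sdist M; set x := f y.
set O := [set x | set_dist x M < T].
have M0 : M !=set0 by case: hM.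
have oO : open O := @tube_open R n.+1 M T M0.
have Ox : O x := hfN y Uy.
have hs : smooth_on O d := hsmooth.
have hu : forall z, O z -> \sum_(i < n.+1) partial i d z * partial i d z = 1.
  move=> z Oz; have := hunit z Oz; rewrite /eucl_norm /gradient.
  under eq_bigr do rewrite mxE.
  have S0 : 0 <= \sum_(i < n.+1) partial i d z ^+ 2.
    by apply: sumr_ge0 => i _; exact: sqr_ge0.
  move=> h1; rewrite -(sqr_sqrtr S0) h1 expr1n.
  done.
have hd0 : differentiable d x := smooth_diff _ _ hs Ox.
have hd1 i : differentiable (partial i d) x := smooth_diff _ _ (smooth_partial _ _ i hs) Ox.
have hd2 i j : differentiable (partial i (partial j d)) x :=
  smooth_diff _ _ (smooth_partial _ _ i (smooth_partial _ _ j hs)) Ox.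
pose P i := partial i d x.
pose H i j := partial i (partial j d) x.
pose Tt k i j := partial k (partial i (partial j d)) x.
have Hs : forall i j, H i j = H j i := fun i j => @sym2 R n.+1 O d i j x oO hs Ox.
have Ts1 : forall k i j, Tt k i j = Tt k j i := fun k i j =>
  @near_partial R n.+1 O _ _ k x oO Ox (fun z Oz => @sym2 R n.+1 O d i j z oO hs Oz).
have Ts2 : forall k i j, Tt k i j = Tt i k j := fun k i j =>
  @sym2 R n.+1 O (partial j d) k i x oO (smooth_partial _ _ j hs) Ox.
have PU : \sum_(i < n.+1) P i ^+ 2 = 1.
  by rewrite -(hu x Ox); apply: eq_bigr => i _; rewrite expr2.
have PZ : forall j, \sum_(i < n.+1) P i * H j i = 0 := fun j =>
  @PZ_lem R n.+1 O d x j oO hs hu Ox.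
have PR : forall k j, \sum_(i < n.+1) (H k i * H j i + P i * Tt k j i) = 0 := fun k j =>
  @PR_lem R n.+1 O d x k j oO hs hu Ox.
have key : forall a b, hessG d a b x = d x * \sum_(rho < n.+1) hess d x a rho * hess d x b rho.
  move=> a b.
  have A := alg R n.+1 P H Tt (d x) Hs Ts1 Ts2 PU PZ PR a b.
  have RHS : \sum_(rho < n.+1) hess d x a rho * hess d x b rho
             = \sum_(rho < n.+1) H a rho * H b rho.
    by apply: eq_bigr => rho _; rewrite !mxE.
  rewrite RHS -A /hessG; congr (_ - _).
  have dGs : forall a' mu b', partial a' (fun z => Gmet d z mu b') x = DG P H Tt (d x) a' mu b' :=
    fun a' mu b' => dG R n.+1 d x a' mu b' hd0 hd1 hd2.
  have PH : (\row_i P i) *m hess d x = 0.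
    apply/rowP => j; rewrite !mxE.
    transitivity (\sum_(i < n.+1) P i * H j i); last exact: PZ.
    by apply: eq_bigr => i _; rewrite !mxE Hs.
  have PI : forall mu, \sum_(c < n.+1) P c * invmx (Gmet d x) c mu = P mu.
    move=> mu.
    have E := PInv_lem R n.+1 (hess d x) (\row_i P i) (d x) PH.
    have := congr1 (fun M : 'rV[R]_n.+1 => M ord0 mu) E.
    rewrite /= !mxE => <-.
    by apply: eq_bigr => c _; rewrite !mxE.
  set S := fun mu => DG P H Tt (d x) a mu b + DG P H Tt (d x) b mu a - DG P H Tt (d x) mu a b.
  transitivity (\sum_(c < n.+1) (2^-1 * \sum_(mu < n.+1) invmx (Gmet d x) c mu * S mu) * P c).
    apply: eq_bigr => c _; rewrite /christoffel; congr (_ * _ * _).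
    by apply: eq_bigr => mu _; rewrite !dGs.
  under eq_bigr => c _ do rewrite -mulrA mulr_suml.
  rewrite -mulr_sumr exchange_big /=; congr (_ * _).
  apply: eq_bigr => mu _; rewrite -PI mulr_suml.
  by apply: eq_bigr => c _; rewrite mulrC mulrA.
apply: eq_bigr => a _; apply: eq_bigr => b _; by rewrite key.
Qed.
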